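(* Let $\mathbb G=V_1\times V_2$ be a step-two Carnot group with $\mathcal A_h(\mathbb G)=\mathcal A(V_1\times V_2)$. Then $\mathcal A_h(\mathbb G')=\mathcal A(V_1'\times V_2')$ for every step-two Carnot group $\mathbb G'=V_1'\times V_2'$ that is a proper quotient of $\mathbb G$.
   Context: A step-two Carnot group is $\mathbb G=V_1\times V_2$ ($V_1,V_2$ finite-dimensional real vector spaces, $V_2\ne\{0\}$) with a bilinear skew-symmetric $[\cdot,\cdot]:V_1\times V_1\to V_2$ whose image spans $V_2$, and group law $(x,z)\cdot(x',z')=(x+x',z+z'+[x,x'])$. $\mathcal A_h(\mathbb G)$ is the space of maps $f:\mathbb G\to\mathbb R$ such that for all $(x,z)\in\mathbb G$, $y\in V_1$, $t\mapsto f((x,z)\cdot(ty,0))$ is affine; $\mathcal A(W)$ is the space of maps affine in the usual sense on a vector space $W$. A Carnot morphism $\pi:\mathbb G\to\mathbb G'$ is $\pi(x,z)=(\pi_1(x),\pi_2(z))$ with $\pi_1:V_1\to V_1'$, $\pi_2:V_2\to V_2'$ linear and $\pi_2([x,y])=[\pi_1(x),\pi_1(y)]'$. $\mathbb G'$ is a proper quotient of $\mathbb G$ if there is a surjective Carnot morphism $\pi:\mathbb G\to\mathbb G'$ with $\ker\pi\ne\{(0,0)\}$. *)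

(* Defs.v *)
(* V1 = 'rV[R]_n, V2 = 'rV[R]_m with R : realType. *)
From HB Require Import structures.
From mathcomp Require Import all_boot all_order all_algebra.
From mathcomp Require Import reals.
Set Implicit Arguments. Unset Strict Implicit. Unset Printing Implicit Defensive.
Import Order.TTheory GRing.Theory Num.Theory.
Local Open Scope ring_scope.

Section Carnot.
Variable R : realType.

Definition bracket (n m : nat) := 'rV[R]_n -> 'rV[R]_n -> 'rV[R]_m.

Definition is_step2_carnot (n m : nat) (br : bracket n m) : Prop :=
  [/\ (0 < m)%N,
      (forall (a : R) x y z, br (a *: x + y) z = a *: br x z + br y z),
      (forall (a : R) x y z, br x (a *: y + z) = a *: br x y + br x z),
      (forall x y, br x y = - br y x) &
      (forall v : 'rV[R]_m, exists (k : nat) (c : 'I_k -> R)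
          (xs ys : 'I_k -> 'rV[R]_n),
          v = \sum_(i < k) c i *: br (xs i) (ys i))].

Definition gmul (n m : nat) (br : bracket n m)
    (p q : 'rV[R]_n * 'rV[R]_m) : 'rV[R]_n * 'rV[R]_m :=
  (p.1 + q.1, p.2 + q.2 + br p.1 q.1).

Definition affine_line (g : R -> R) : Prop :=
  exists a b : R, forall t, g t = a * t + b.

Definition horiz_affine (n m : nat) (br : bracket n m)
    (f : 'rV[R]_n * 'rV[R]_m -> R) : Prop :=
  forall (p : 'rV[R]_n * 'rV[R]_m) (y : 'rV[R]_n),
    affine_line (fun t => f (gmul br p (t *: y, 0))).

Definition affine_map (n m : nat) (f : 'rV[R]_n * 'rV[R]_m -> R) : Prop :=
  forall (p q : 'rV[R]_n * 'rV[R]_m) (t : R),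
    f (t *: p.1 + (1 - t) *: q.1, t *: p.2 + (1 - t) *: q.2)
    = t * f p + (1 - t) * f q.

(* Carnot morphism pi(x,z) = (pi1 x, pi2 z), pi1, pi2 linear
   (represented by matrices), pi2 [x,y] = [pi1 x, pi1 y]'. *)
Definition carnot_morphism (n m n' m' : nat) (br : bracket n m)
    (br' : bracket n' m') (A : 'M[R]_(n, n')) (B : 'M[R]_(m, m')) : Prop :=
  forall x y, br x y *m B = br' (x *m A) (y *m A).

Definition proper_quotient (n m n' m' : nat) (br : bracket n m)
    (br' : bracket n' m') : Prop :=
  exists (A : 'M[R]_(n, n')) (B : 'M[R]_(m, m')),
    [/\ carnot_morphism br br' A B,
        (forall (x' : 'rV[R]_n') (z' : 'rV[R]_m'),
           exists x z, x *m A = x' /\ z *m B = z') &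
        (exists (x : 'rV[R]_n) (z : 'rV[R]_m), (x, z) <> (0, 0) /\ x *m A = 0 /\ z *m B = 0)].

End Carnot.

(* Main.v *)
Require Import Defs.
From HB Require Import structures.
From mathcomp Require Import all_boot all_order all_algebra.
From mathcomp Require Import reals.
From mathcomp Require Import ring lra.
Local Open Scope ring_scope.
Import GRing.Theory.

Theorem proposition6p5 (R : realType) (n m : nat) (br : bracket R n m) :
  is_step2_carnot br ->
  (forall f : 'rV[R]_n * 'rV[R]_m -> R, horiz_affine br f <-> affine_map f) ->
  forall (n' m' : nat) (br' : bracket R n' m'),
    is_step2_carnot br' ->
    proper_quotient br br' ->
    forall f' : 'rV[R]_n' * 'rV[R]_m' -> R,
      horiz_affine br' f' <-> affine_map f'.
Proof.
move=> _ hG n' m' br' [_ _ lin2 _ _] [A [B [hmor hsurj _]]] f'.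
split; last first.
  move=> haff p y.
  have br0 : forall x, br' x 0 = 0.
    move=> x; have := lin2 1 x 0 0.
    rewrite !scale1r !addr0 => h.
    by apply: (@addrI _ (br' x 0)); rewrite addr0 -h.
  exists (f' (p.1 + y, p.2 + br' p.1 y) - f' p), (f' p) => t.
  have := haff (p.1 + y, p.2 + br' p.1 y) p t.
  rewrite /gmul /=.
  have -> : t *: (p.1 + y) + (1 - t) *: p.1 = p.1 + t *: y.
    by rewrite scalerDr scalerBl scale1r addrC addrA subrK addrC.
  have -> : t *: (p.2 + br' p.1 y) + (1 - t) *: p.2 = p.2 + 0 + br' p.1 (t *: y).
    have := lin2 t p.1 y 0; rewrite addr0 br0 addr0 => ->.
    by rewrite scalerDr scalerBl scale1r addr0 addrC addrA subrK addrC.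
  move=> ->; ring.
move=> hh.
pose f := fun p : 'rV[R]_n * 'rV[R]_m => f' (p.1 *m A, p.2 *m B).
have hf : horiz_affine br f.
  move=> p y; have [a [b hab]] := hh (p.1 *m A, p.2 *m B) (y *m A).
  exists a, b => t; rewrite -hab /f /gmul /=.
  by rewrite !mulmxDl hmor -!scalemxAl mul0mx.
have := (hG f).1 hf => haf p q t.
have [x1 [z1 [e1 e2]]] := hsurj p.1 p.2.
have [x2 [z2 [e3 e4]]] := hsurj q.1 q.2.
have := haf (x1, z1) (x2, z2) t.
rewrite /f /= !mulmxDl -!scalemxAl e1 e2 e3 e4.
by case: p {e1 e2} => ? ?; case: q {e3 e4} => ? ?.
Qed.
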